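(* For every $n\geq 8$ with $n\equiv 0,2,8$ or $10 \pmod{16}$, there exists an almost 2-perfect maximum 8-cycle packing of $K_n$.
   Context: An 8-cycle packing of $K_n$ on vertex set $\mathcal{X}$ is a triple $(\mathcal{X},\mathcal{C},\mathcal{L})$ with $\mathcal{C}$ a collection of pairwise edge-disjoint 8-cycles of $K_n$ and leave $\mathcal{L}$ the set of edges in no cycle of $\mathcal{C}$; it is maximum if $|\mathcal{L}|$ is minimum among all 8-cycle packings of $K_n$. For an 8-cycle $C$, an inside 8-cycle of $C$ is an 8-cycle on the same vertex set sharing no edge with $C$. The packing is almost 2-perfect if one can choose for each $C\in\mathcal{C}$ an inside 8-cycle $C'$ such that $(\mathcal{X},\{C'\},\mathcal{L})$ is again an 8-cycle packing with the same leave. *)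

(* Defs.v *)
From mathcomp Require Import all_boot.
Set Implicit Arguments. Unset Strict Implicit. Unset Printing Implicit Defensive.

Definition Kedges (n : nat) : {set {set 'I_n}} := [set e : {set 'I_n} | #|e| == 2].

(* An 8-cycle is given by a cyclic sequence of 8 distinct vertices
   (c_0 c_1 ... c_7); its edges are {c_i, c_(i+1 mod 8)}. *)
Definition is_cyc8 (n : nat) (c : 8.-tuple 'I_n) : bool := uniq c.

Definition cedges (n : nat) (c : 8.-tuple 'I_n) : {set {set 'I_n}} :=
  [set [set tnth c i; tnth c (ordS i)] | i : 'I_8].

Definition is_packing (n k : nat) (C : 'I_k -> 8.-tuple 'I_n) : Prop :=
  (forall i, is_cyc8 (C i)) /\
  (forall i j, i != j -> [disjoint cedges (C i) & cedges (C j)]).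

Definition leave (n k : nat) (C : 'I_k -> 8.-tuple 'I_n) : {set {set 'I_n}} :=
  Kedges n :\: \bigcup_(i < k) cedges (C i).

Definition maximum_packing (n k : nat) (C : 'I_k -> 8.-tuple 'I_n) : Prop :=
  is_packing C /\
  forall (k' : nat) (C' : 'I_k' -> 8.-tuple 'I_n),
    is_packing C' -> #|leave C| <= #|leave C'|.

Definition inside8 (n : nat) (c d : 8.-tuple 'I_n) : Prop :=
  [/\ is_cyc8 d, [set x in d] = [set x in c] & [disjoint cedges c & cedges d]].

Definition almost_2perfect (n k : nat) (C : 'I_k -> 8.-tuple 'I_n) : Prop :=
  is_packing C /\
  exists D : 'I_k -> 8.-tuple 'I_n,
    [/\ forall i, inside8 (C i) (D i), is_packing D & leave D = leave C].

(* Main.v *)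
Require Import Defs.
From mathcomp Require Import all_boot.
From mathcomp Require Import zify.
Set Implicit Arguments. Unset Strict Implicit. Unset Printing Implicit Defensive.


Lemma ordS8_neqb : [forall i : 'I_8, ordS i != i].
Proof. apply/forallP => i. by case: i => [[|[|[|[|[|[|[|[|i]]]]]]]] Hi]. Qed.
Lemma ordS8_neq (i : 'I_8) : ordS i != i.
Proof. exact: (forallP ordS8_neqb i). Qed.
Lemma ordSS8_neqb : [forall i : 'I_8, ordS (ordS i) != i].
Proof. apply/forallP => i. by case: i => [[|[|[|[|[|[|[|[|i]]]]]]]] Hi]. Qed.
Lemma ordSS8_neq (i : 'I_8) : ordS (ordS i) != i.
Proof. exact: (forallP ordSS8_neqb i). Qed.

Section Generic.
Variable n : nat.
Implicit Types c d : 8.-tuple 'I_n.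

Definition edg c (i : 'I_8) : {set 'I_n} := [set tnth c i; tnth c (ordS i)].

Lemma cedgesE c : cedges c = [set edg c i | i : 'I_8].
Proof. by []. Qed.

Lemma edg_in c i : edg c i \in cedges c.
Proof. by rewrite cedgesE; apply: imset_f. Qed.

Lemma edg_inj c : uniq c -> injective (edg c).
Proof.
move=> /tuple_uniqP inj i j E.
have H1 : tnth c i \in edg c j by rewrite -E !inE eqxx.
have H2 : tnth c (ordS i) \in edg c j by rewrite -E !inE eqxx orbT.
move: H1 H2; rewrite !inE => /orP[/eqP/inj //|/eqP/inj Hij] /orP[/eqP/inj Hj|/eqP/inj/ordS_inj //].
by move: (ordSS8_neq j); rewrite -Hij Hj eqxx.
Qed.

Lemma card_cedges c : uniq c -> #|cedges c| = 8.
Proof. by move=> u; rewrite cedgesE card_imset ?card_ord //; apply: edg_inj. Qed.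

Lemma edg_card c i : uniq c -> #|edg c i| = 2.
Proof.
move=> /tuple_uniqP inj; rewrite cards2.
case: eqP => // /inj E; by move: (ordS8_neq i); rewrite -E eqxx.
Qed.

Lemma cedges_sub c : uniq c -> cedges c \subset Kedges n.
Proof.
move=> u; apply/subsetP => e /imsetP [i _ ->].
by rewrite inE edg_card.
Qed.

Definition deg (A : {set {set 'I_n}}) (v : 'I_n) := #|[set e in A | v \in e]|.

Lemma preim1_card (f : 'I_8 -> 'I_n) v : injective f -> (exists i, f i = v) ->
  #|[set i | f i == v]| = 1.
Proof.
move=> inj [i0 <-]; have -> : [set i | f i == f i0] = [set i0].
  by apply/setP => j; rewrite !inE; apply/eqP/eqP => [/inj|->].
by rewrite cards1.
Qed.

Lemma preim0_card (f : 'I_8 -> 'I_n) v : (forall i, f i != v) ->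
  #|[set i | f i == v]| = 0.
Proof.
move=> H; apply/eqP; rewrite cards_eq0; apply/eqP/setP => j.
by rewrite !inE (negbTE (H j)).
Qed.

Lemma deg_cedges c v : uniq c -> deg (cedges c) v = 2 * (v \in c).
Proof.
move=> u; have inj := tuple_uniqP _ u; rewrite /deg.
have -> : [set e in cedges c | v \in e] = edg c @: [set i | v \in edg c i].
  apply/setP => e; rewrite inE; apply/andP/imsetP.
    by case; rewrite cedgesE => /imsetP [i _ ->] vi; exists i => //; rewrite in_set.
  by case=> i; rewrite in_set => vi ->; rewrite edg_in.
rewrite card_imset; last exact: edg_inj.
have -> : [set i | v \in edg c i] =
   [set i | tnth c i == v] :|: [set i | tnth c (ordS i) == v].
  by apply/setP => i; rewrite !inE ![v == _]eq_sym.
rewrite cardsU.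
have -> : [set i | tnth c i == v] :&: [set i | tnth c (ordS i) == v] = set0.
  apply/setP => i; rewrite !inE; apply/negP => /andP[/eqP a /eqP b].
  by move: (ordS8_neq i); rewrite -b in a; rewrite -(inj _ _ a) eqxx.
rewrite cards0 subn0.
have injS : injective (fun i => tnth c (ordS i)) by move=> i j /inj /ordS_inj.
case: (boolP (v \in c)) => [/tnthP [i0 ->] | vn].
  rewrite (preim1_card inj); last by exists i0.
  rewrite (@preim1_card (fun i => tnth c (ordS i))) //.
  by exists (ord_pred i0); rewrite ord_predK.
rewrite !preim0_card //.
  by move=> i; apply: contra vn => /eqP <-; rewrite mem_tnth.
by move=> i; apply: contra vn => /eqP <-; rewrite mem_tnth.
Qed.

End Generic.


Definition phin (m g h c x : nat) : nat :=
  if g == h then (if x < 8 then 8*g + x else 8*m + (x - 8))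
  else (if x < 4 then 8*g + 4*(c %/ 4) + x else 8*h + 4*((c %/ 2) %% 2) + (x - 4)).

Definition typeOK (r g h x y : nat) : bool :=
  if g == h then [&& x < 8 + 2*r, y < 8 + 2*r & ~~ ((8 <= x) && (8 <= y))]
  else [&& x < 8, y < 8 & (x < 4) != (y < 4)].

Definition validn (m g h c : nat) := [&& g < m, h < m, c < 8 & (g == h) || (g < h)].

Lemma key m r g h c g' h' c' x y x' y' : r <= 1 ->
  validn m g h c -> validn m g' h' c' -> typeOK r g h x y -> typeOK r g' h' x' y' ->
  phin m g h c x = phin m g' h' c' x' -> phin m g h c y = phin m g' h' c' y' ->
  [/\ g = g', h = h', (g == h) || (c %/ 2 == c' %/ 2), x = x' & y = y'].
Proof.
rewrite /validn /typeOK /phin => r1 /and4P[gm hm c8 gh] /and4P[gm' hm' c8' gh'].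
case: (g =P h) => [<-|/eqP ngh]; case: (g' =P h') => [<-|/eqP ngh'] /=.
- move=> /and3P[xb yb nxy] /and3P[xb' yb' nxy'].
  by case: ifP; case: ifP; case: ifP; case: ifP => /= *; split; rewrite ?eqxx //; lia.
- move=> /and3P[xb yb nxy] /and3P[xb' yb' nxy'].
  by case: ifP; case: ifP; case: ifP; case: ifP => /= *; split; rewrite ?eqxx //; lia.
- move=> /and3P[xb yb nxy] /and3P[xb' yb' nxy'].
  by case: ifP; case: ifP; case: ifP; case: ifP => /= *; split; rewrite ?eqxx //; lia.
- move=> /and3P[xb yb nxy] /and3P[xb' yb' nxy'].
  by case: ifP; case: ifP; case: ifP; case: ifP => /= *; split; rewrite ?eqxx //; lia.
Qed.

Definition bnd (r g h : nat) := if g == h then 8 + 2 * r else 8.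

Lemma phin_inj m r g h c x x' : r <= 1 -> validn m g h c ->
  x < bnd r g h -> x' < bnd r g h -> phin m g h c x = phin m g h c x' -> x = x'.
Proof.
rewrite /validn /bnd /phin => r1 /and4P[gm hm c8 gh].
by case: eqP => ?; case: ifP; case: ifP => *; lia.
Qed.

Lemma phin_lt m r g h c x : r <= 1 -> validn m g h c ->
  x < bnd r g h -> phin m g h c x < 8 * m + 2 * r.
Proof.
rewrite /validn /bnd /phin => r1 /and4P[gm hm c8 gh].
by case: eqP => ?; case: ifP => *; lia.
Qed.

Lemma phin_block m g h c c' x : c %/ 2 = c' %/ 2 -> phin m g h c x = phin m g h c' x.
Proof.
move=> E; rewrite /phin; case: eqP => // _.
have -> : c %/ 4 = c' %/ 4 by rewrite (divnMA c 2 2) (divnMA c' 2 2) E.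
by rewrite E.
Qed.


Definition pe (t : seq nat) (i : nat) := (nth 0 t i, nth 0 t (i.+1 %% 8)).
Definition sameE (p q : nat * nat) :=
  ((p.1 == q.1) && (p.2 == q.2)) || ((p.1 == q.2) && (p.2 == q.1)).

Definition tmplOK r (b : bool) (t : seq nat) :=
  [&& size t == 8, uniq t &
      all (fun i => typeOK r 0 (if b then 0 else 1) (pe t i).1 (pe t i).2) (iota 0 8)].

Definition famOK r (FW FK : seq (seq nat)) :=
  [&& all (tmplOK r true) FW, size FW <= 8, size FK == 2 & all (tmplOK r false) FK].

Definition disjF (F : seq (seq nat)) :=
  all (fun l => all (fun l' => (l == l') || all (fun i => all (fun j =>
     ~~ sameE (pe (nth [::] F l) i) (pe (nth [::] F l') j)) (iota 0 8)) (iota 0 8))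
     (iota 0 (size F))) (iota 0 (size F)).

Lemma all_iotaP (p : pred nat) k i : all p (iota 0 k) -> i < k -> p i.
Proof. by move=> /allP H ik; apply: H; rewrite mem_iota. Qed.

Lemma disjF_P F l l' i j : disjF F -> l < size F -> l' < size F -> i < 8 -> j < 8 ->
  sameE (pe (nth [::] F l) i) (pe (nth [::] F l') j) -> l = l'.
Proof.
move=> H lF l'F i8 j8 S.
have /orP[/eqP //|H2] := all_iotaP (all_iotaP H lF) l'F.
by have := all_iotaP (all_iotaP H2 i8) j8; rewrite S.
Qed.

Lemma typeOK_sym r g h x y : typeOK r g h x y = typeOK r g h y x.
Proof. rewrite /typeOK; case: eqP => _; case: (x < _); case: (y < _) => //=; [rewrite andbC // | ]. by rewrite eq_sym. Qed.

Section Cons.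
Variables n m r : nat.
Hypothesis HN : n.+1 = 8 * m + 2 * r.
Hypothesis Hr : r <= 1.

Definition Idx := ('I_m * 'I_m * 'I_8)%type.
Definition sg (s : Idx) : nat := s.1.1.
Definition sh (s : Idx) : nat := s.1.2.
Definition sc (s : Idx) : nat := s.2.

Definition valid (w : nat) (s : Idx) : bool :=
  if sg s == sh s then sc s < w else sg s < sh s.

Definition tmpl (FW FK : seq (seq nat)) (s : Idx) : seq nat :=
  if sg s == sh s then nth [::] FW (sc s) else nth [::] FK (sc s %% 2).

Definition V (s : Idx) (x : nat) : 'I_n.+1 := inord (phin m (sg s) (sh s) (sc s) x).

Definition cyc FW FK (s : Idx) : 8.-tuple 'I_n.+1 :=
  [tuple V s (nth 0 (tmpl FW FK s) i) | i < 8].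

Lemma tnth_cyc FW FK s i : tnth (cyc FW FK s) i = V s (nth 0 (tmpl FW FK s) i).
Proof. by rewrite tnth_mktuple. Qed.

Lemma valid_validn w s : valid w s -> validn m (sg s) (sh s) (sc s).
Proof.
rewrite /valid /validn !ltn_ord /= => H.
by case: eqP H => [->|_ ->]; rewrite ?eqxx ?orbT.
Qed.

Section Fam.
Variables FW FK : seq (seq nat).
Hypothesis Hfam : famOK r FW FK.

Lemma tmpl_ok s : valid (size FW) s -> tmplOK r (sg s == sh s) (tmpl FW FK s).
Proof.
case/and4P: Hfam => /allP AW _ /eqP sK /allP AK.
rewrite /valid /tmpl; case: eqP => _ H.
  by apply: AW; rewrite mem_nth.
by apply: AK; rewrite mem_nth // sK ltn_mod.
Qed.

Lemma tmpl_typ s i : valid (size FW) s -> i < 8 ->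
  typeOK r (sg s) (sh s) (pe (tmpl FW FK s) i).1 (pe (tmpl FW FK s) i).2.
Proof.
move=> /tmpl_ok /and3P [_ _ /allP A] i8.
have := A i; rewrite mem_iota /= => /(_ i8).
by rewrite /typeOK; case: (sg s == sh s).
Qed.

Lemma tmpl_bnd s i : valid (size FW) s -> i < 8 -> nth 0 (tmpl FW FK s) i < bnd r (sg s) (sh s).
Proof.
move=> vs i8; have := tmpl_typ vs i8; rewrite /typeOK /bnd /=.
by case: eqP => _ /and3P[].
Qed.

Lemma tmpl_uniq s : valid (size FW) s -> uniq (tmpl FW FK s).
Proof. by move=> /tmpl_ok /and3P[]. Qed.

Lemma tmpl_size s : valid (size FW) s -> size (tmpl FW FK s) = 8.
Proof. by move=> /tmpl_ok /and3P[/eqP]. Qed.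

Lemma V_val w s x : valid w s -> x < bnd r (sg s) (sh s) ->
   nat_of_ord (V s x) = phin m (sg s) (sh s) (sc s) x.
Proof.
move=> vs xb; rewrite /V inordK // HN.
exact: (phin_lt Hr (valid_validn vs) xb).
Qed.

Lemma cyc_uniq s : valid (size FW) s -> uniq (cyc FW FK s).
Proof.
move=> vs; apply/tuple_uniqP => i j; rewrite !tnth_cyc => /(congr1 (@nat_of_ord _)).
rewrite (V_val vs (tmpl_bnd vs (ltn_ord i))) (V_val vs (tmpl_bnd vs (ltn_ord j))).
move=> /(phin_inj Hr (valid_validn vs)).
move=> /(_ (tmpl_bnd vs (ltn_ord i)) (tmpl_bnd vs (ltn_ord j))) /eqP.
by rewrite nth_uniq ?tmpl_size ?tmpl_uniq // => /eqP /val_inj.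
Qed.

End Fam.
End Cons.


Section Shared.
Variables n m r : nat.
Hypothesis HN : n.+1 = 8 * m + 2 * r.
Hypothesis Hr : r <= 1.

Lemma edge_shared FW FK FW' FK' (s s' : Idx m) (i j : 'I_8) :
  famOK r FW FK -> famOK r FW' FK' -> valid (size FW) s -> valid (size FW') s' ->
  edg (cyc n FW FK s) i = edg (cyc n FW' FK' s') j ->
  [/\ sg s = sg s', sh s = sh s', (sg s == sh s) || (sc s %/ 2 == sc s' %/ 2)
    & sameE (pe (tmpl FW FK s) i) (pe (tmpl FW' FK' s') j)].
Proof.
move=> F1 F2 v1 v2; rewrite /edg !tnth_cyc /pe /=.
set x := nth 0 _ i; set y := nth 0 _ (i.+1 %% 8).
set x' := nth 0 _ j; set y' := nth 0 _ (j.+1 %% 8) => E.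
have ab : V n s x != V n s y.
  have /tuple_uniqP inj := cyc_uniq HN Hr F1 v1.
  apply/eqP => Exy; have := inj i (ordS i); rewrite !tnth_cyc => /(_ Exy) Eio.
  by move: (ordS8_neq i); rewrite -Eio eqxx.
have bx : x < bnd r (sg s) (sh s) by apply: (tmpl_bnd F1 v1).
have by' : y < bnd r (sg s) (sh s) by apply: (tmpl_bnd F1 v1); rewrite ltn_mod.
have bx' : x' < bnd r (sg s') (sh s') by apply: (tmpl_bnd F2 v2).
have by'' : y' < bnd r (sg s') (sh s') by apply: (tmpl_bnd F2 v2); rewrite ltn_mod.
have T1 : typeOK r (sg s) (sh s) x y by apply: (tmpl_typ F1 v1).
have T2 : typeOK r (sg s') (sh s') x' y' by apply: (tmpl_typ F2 v2).
have Vv1 := V_val HN Hr v1.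
have Vv2 := V_val HN Hr v2.
have w1 := valid_validn v1; have w2 := valid_validn v2.
have Hx : V n s x \in [set V n s' x'; V n s' y'] by rewrite -E set21.
have Hy : V n s y \in [set V n s' x'; V n s' y'] by rewrite -E set22.
move: Hx Hy; rewrite !inE => /orP[]/eqP Ex /orP[]/eqP Ey.
- by move: ab; rewrite Ex Ey eqxx.
- move: (congr1 (@nat_of_ord _) Ex) (congr1 (@nat_of_ord _) Ey).
  rewrite !Vv1 // !Vv2 // => P1 P2.
  have [-> -> ? -> ->] := key Hr w1 w2 T1 T2 P1 P2.
  by split; rewrite // /sameE !eqxx.
- move: (congr1 (@nat_of_ord _) Ex) (congr1 (@nat_of_ord _) Ey).
  rewrite !Vv1 // !Vv2 // => P1 P2.
  rewrite typeOK_sym in T2.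
  have [-> -> ? -> ->] := key Hr w1 w2 T1 T2 P1 P2.
  by split; rewrite // /sameE !eqxx orbT.
- by move: ab; rewrite Ex Ey eqxx.
Qed.
End Shared.


Section Pack.
Variables n m r : nat.
Hypothesis HN : n.+1 = 8 * m + 2 * r.
Hypothesis Hr : r <= 1.

Lemma idx_eq (s s' : Idx m) : sg s = sg s' -> sh s = sh s' -> sc s = sc s' -> s = s'.
Proof.
case: s => [[g h] c]; case: s' => [[g' h'] c'] /=; rewrite /sg /sh /sc /=.
by move=> /val_inj -> /val_inj -> /val_inj ->.
Qed.

Lemma shared_same FW FK FW' FK' (s s' : Idx m) (i j : 'I_8) :
  famOK r FW FK -> famOK r FW' FK' -> valid (size FW) s -> valid (size FW') s' ->
  edg (cyc n FW FK s) i = edg (cyc n FW' FK' s') j ->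
  [/\ sg s = sg s', sh s = sh s', phin m (sg s) (sh s) (sc s) =1 phin m (sg s') (sh s') (sc s') &
   if sg s == sh s then sameE (pe (nth [::] FW (sc s)) i) (pe (nth [::] FW' (sc s')) j)
   else (sc s %/ 2 == sc s' %/ 2) &&
        sameE (pe (nth [::] FK (sc s %% 2)) i) (pe (nth [::] FK' (sc s' %% 2)) j)].
Proof.
move=> F1 F2 v1 v2 E.
have [eg eh B S] := edge_shared HN Hr F1 F2 v1 v2 E.
move: S; rewrite /tmpl -eg -eh; case: eqP B => [ghE _ S | _ /= /eqP B S].
  by split => // x; rewrite /phin ghE !eqxx.
by split => [||x|] //; [rewrite (phin_block _ _ _ _ B) | rewrite B eqxx S].
Qed.

Definition VS w : {set Idx m} := [set s | valid w s].

Lemma cyc_disj FW FK (s s' : Idx m) :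
  famOK r FW FK -> disjF FW -> disjF FK -> valid (size FW) s -> valid (size FW) s' ->
  s != s' -> [disjoint cedges (cyc n FW FK s) & cedges (cyc n FW FK s')].
Proof.
move=> F dW dK v1 v2 ne; rewrite -setI_eq0; apply/eqP/setP => e; rewrite !inE.
apply/negP => /andP[]; rewrite !cedgesE => /imsetP[i _ ->] /imsetP[j _ E].
have [eg eh _ S] := shared_same F F v1 v2 E.
case/negP: ne; apply/eqP; apply: idx_eq => //.
have sK : size FK = 2 by case/and4P: F => _ _ /eqP.
move: v1 v2 S; rewrite /valid -eg -eh; case: eqP => _ v1 v2.
  by move=> S; apply: (disjF_P dW v1 v2 (ltn_ord i) (ltn_ord j) S).
move=> /andP[/eqP D S]; rewrite (divn_eq (sc s) 2) (divn_eq (sc s') 2) D.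
by rewrite (disjF_P dK _ _ (ltn_ord i) (ltn_ord j) S) // sK ltn_mod.
Qed.

Definition Cf w FW FK : 'I_#|VS w| -> 8.-tuple 'I_n.+1 :=
  fun i => cyc n FW FK (enum_val i).
Arguments Cf : clear implicits.

Lemma enum_valid w (i : 'I_#|VS w|) : valid w (enum_val i).
Proof. by have := enum_valP i; rewrite inE. Qed.

Lemma Cf_packing w FW FK : size FW = w ->
  famOK r FW FK -> disjF FW -> disjF FK -> is_packing (Cf w FW FK).
Proof.
move=> sw F dW dK; split => [i|i j ne].
  by apply: (cyc_uniq HN Hr F); rewrite sw; apply: enum_valid.
apply: cyc_disj => //; try by rewrite sw; exact: enum_valid.
by apply: contra ne => /eqP /enum_val_inj ->.
Qed.

End Pack.


Definition vsetEq (t t' : seq nat) := all (fun x => x \in t') t && all (fun x => x \in t) t'.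
Definition noShare (t t' : seq nat) :=
  all (fun i => all (fun j => ~~ sameE (pe t i) (pe t' j)) (iota 0 8)) (iota 0 8).
Definition crossF (F F' : seq (seq nat)) :=
  (size F' == size F) && all (fun l => vsetEq (nth [::] F l) (nth [::] F' l) &&
      noShare (nth [::] F l) (nth [::] F' l)) (iota 0 (size F)).
Definition coverF (F F' : seq (seq nat)) :=
  all (fun l => all (fun i => has (fun l' => has (fun j =>
     sameE (pe (nth [::] F' l) i) (pe (nth [::] F l') j)) (iota 0 8)) (iota 0 (size F)))
     (iota 0 8)) (iota 0 (size F')).

Lemma crossF_P F F' l : crossF F F' -> l < size F ->
  vsetEq (nth [::] F l) (nth [::] F' l) && noShare (nth [::] F l) (nth [::] F' l).
Proof. by case/andP => _ H lF; apply: (all_iotaP H lF). Qed.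

Lemma coverF_P F F' l i : coverF F F' -> l < size F' -> i < 8 ->
  exists l' j, [/\ l' < size F, j < 8 & sameE (pe (nth [::] F' l) i) (pe (nth [::] F l') j)].
Proof.
move=> H lF i8; have /hasP [l' l'F /hasP [j j8 S]] := all_iotaP (all_iotaP H lF) i8.
by exists l', j; move: l'F j8; rewrite !mem_iota.
Qed.

Section Inside.
Variables n m r : nat.
Hypothesis HN : n.+1 = 8 * m + 2 * r.
Hypothesis Hr : r <= 1.

Lemma mem_cycP FW FK (s : Idx m) y : famOK r FW FK -> valid (size FW) s ->
  reflect (exists2 x, x \in tmpl FW FK s & y = V n s x) (y \in cyc n FW FK s).
Proof.
move=> F v; have sz := tmpl_size F v.
apply: (iffP (tnthP _ _)) => [[i ->]|[x xt ->]].
  by rewrite tnth_cyc; exists (nth 0 (tmpl FW FK s) i) => //; rewrite mem_nth // sz.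
have := xt; rewrite -index_mem sz => ix.
by exists (Ordinal ix); rewrite tnth_cyc /= nth_index.
Qed.

Section Two.
Variables FW FK FW' FK' : seq (seq nat).
Hypothesis F1 : famOK r FW FK.
Hypothesis F2 : famOK r FW' FK'.
Hypothesis cW : crossF FW FW'.
Hypothesis cK : crossF FK FK'.

Lemma sizeW : size FW' = size FW.
Proof. by case/andP: cW => /eqP. Qed.

Lemma tmpl_cross (s : Idx m) : valid (size FW) s ->
  vsetEq (tmpl FW FK s) (tmpl FW' FK' s) && noShare (tmpl FW FK s) (tmpl FW' FK' s).
Proof.
rewrite /valid /tmpl; case: eqP => _ v; first exact: (crossF_P cW).
by apply: (crossF_P cK); case/and4P: F1 => _ _ /eqP -> _; rewrite ltn_mod.
Qed.

Lemma inside_cyc (s : Idx m) : valid (size FW) s -> inside8 (cyc n FW FK s) (cyc n FW' FK' s).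
Proof.
move=> v; have v' : valid (size FW') s by rewrite sizeW.
case/andP: (tmpl_cross v) => /andP [/allP A1 /allP A2] NS.
split; first exact: (cyc_uniq HN Hr F2 v').
  apply/setP => y; rewrite !inE.
  apply/(mem_cycP _ F2 v')/(mem_cycP _ F1 v) => [[x xt ->]|[x xt ->]]; exists x => //.
    exact: A2.
  exact: A1.
rewrite -setI_eq0; apply/eqP/setP => e; rewrite !inE.
apply/negP => /andP[]; rewrite !cedgesE => /imsetP[i _ ->] /imsetP[j _ E].
have [_ _ _ S] := shared_same HN Hr F1 F2 v v' E.
move: S NS; rewrite /tmpl; case: eqP => _ S NS.
  by have := all_iotaP (all_iotaP NS (ltn_ord i)) (ltn_ord j); rewrite S.
move: S => /andP[_ S].
by have := all_iotaP (all_iotaP NS (ltn_ord i)) (ltn_ord j); rewrite S.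
Qed.

End Two.
End Inside.

Lemma sameE_set (T : finType) (f : nat -> T) p q : sameE p q ->
  [set f p.1; f p.2] = [set f q.1; f q.2].
Proof. by case/orP => /andP[/eqP -> /eqP ->] //; rewrite setUC. Qed.

Section Cover.
Variables n m r : nat.
Hypothesis HN : n.+1 = 8 * m + 2 * r.
Hypothesis Hr : r <= 1.

Lemma edg_pe FW FK (s : Idx m) j :
  edg (cyc n FW FK s) j = [set V n s (pe (tmpl FW FK s) j).1; V n s (pe (tmpl FW FK s) j).2].
Proof. by rewrite /edg !tnth_cyc. Qed.

Variables FW FK FW' FK' : seq (seq nat).
Hypothesis F1 : famOK r FW FK.
Hypothesis F2 : famOK r FW' FK'.
Hypothesis covW : coverF FW FW'.
Hypothesis covK : coverF FK FK'.
Hypothesis sz : size FW' = size FW.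

Lemma cover_sub (s : Idx m) : valid (size FW') s ->
  cedges (cyc n FW' FK' s) \subset \bigcup_(s2 in VS m (size FW)) cedges (cyc n FW FK s2).
Proof.
move=> v; apply/subsetP => e; rewrite cedgesE => /imsetP [j0 _ ->].
have sW : size FW <= 8 by case/and4P: F1.
have sK : size FK = 2 by case/and4P: F1 => _ _ /eqP.
have sK' : size FK' = 2 by case/and4P: F2 => _ _ /eqP.
move: v; rewrite /valid edg_pe /tmpl; case: eqP => [ghE|ghN] v.
  have [l' [j [l'F j8 S]]] := coverF_P covW v (ltn_ord j0).
  pose s2 : Idx m := (s.1, inord l').
  have l'v : (inord l' : 'I_8) = l' :> nat by rewrite inordK // (leq_trans l'F).
  have v2 : valid (size FW) s2 by rewrite /valid /sg /sh /sc /= -/(sg s) -/(sh s) ghE eqxx l'v.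
  apply/bigcupP; exists s2; first by rewrite inE.
  rewrite cedgesE; apply/imsetP; exists (Ordinal j8) => //.
  rewrite edg_pe /tmpl /sg /sh /sc /= -/(sg s) -/(sh s) ghE eqxx l'v.
  have HV x : V n s2 x = V n s x by rewrite /V /phin /sg /sh /sc /= -/(sg s) -/(sh s) ghE !eqxx.
  rewrite !HV; exact: (sameE_set (V n s) S).
have l8 : sc s %% 2 < size FK' by rewrite sK' ltn_mod.
have [l' [j [l'F j8 S]]] := coverF_P covK l8 (ltn_ord j0).
rewrite sK in l'F.
pose c2 := 2 * (sc s %/ 2) + l'.
have c28 : c2 < 8.
  by rewrite /c2; have := ltn_ord s.2; rewrite -/(sc s); lia.
pose s2 : Idx m := (s.1, Ordinal c28).
have c2d : c2 %/ 2 = sc s %/ 2 by rewrite /c2; lia.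
have c2m : c2 %% 2 = l' by rewrite /c2; lia.
have v2 : valid (size FW) s2 by rewrite /valid /sg /sh /= -/(sg s) -/(sh s) (introF eqP ghN).
apply/bigcupP; exists s2; first by rewrite inE.
rewrite cedgesE; apply/imsetP; exists (Ordinal j8) => //.
rewrite edg_pe /tmpl /sg /sh /sc /= -/(sg s) -/(sh s) (introF eqP ghN) c2m.
have HV x : V n s2 x = V n s x.
  by rewrite /V /sg /sh /sc /= -/(sg s) -/(sh s) (phin_block _ _ _ _ c2d).
by rewrite !HV; exact: (sameE_set (V n s) S).
Qed.
End Cover.


Lemma card_bigcup_seq (T I : finType) (F : I -> {set T}) (r : seq I) :
  uniq r -> (forall i j, i != j -> [disjoint F i & F j]) ->
  #|\bigcup_(i <- r) F i| = \sum_(i <- r) #|F i|.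
Proof.
move=> ur H; elim: r ur => [|i r IH] /=; first by rewrite !big_nil cards0.
case/andP => ir ur; rewrite !big_cons cardsU -IH //.
suff -> : F i :&: \bigcup_(j <- r) F j = set0 by rewrite cards0 subn0.
apply/setP => x; rewrite !inE; apply/negP => /andP[xi].
rewrite bigcup_seq => /bigcupP [j jr xj].
have ij : i != j by apply: contra ir => /eqP ->.
by move: (H _ _ ij) => /disjointFr /(_ xi); rewrite xj.
Qed.

Lemma card_bigcup_disj (T I : finType) (F : I -> {set T}) :
  (forall i j, i != j -> [disjoint F i & F j]) ->
  #|\bigcup_i F i| = \sum_i #|F i|.
Proof. by move=> H; apply: card_bigcup_seq => //; apply: index_enum_uniq. Qed.

Lemma card_filter_sum (T : finType) (A : {set T}) (P : pred T) :
  #|[set x in A | P x]| = \sum_(x in A) (P x : nat).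
Proof.
rewrite -sum1_card big_mkcond [RHS]big_mkcond; apply: eq_bigr => x _; rewrite !inE.
by case: (x \in A); case: (P x).
Qed.

Section Parity.
Variable n : nat.

Lemma deg_Kedges (v : 'I_n) : deg (Kedges n) v = n.-1.
Proof.
rewrite /deg /Kedges.
have -> : [set e in [set e0 : {set 'I_n} | #|e0| == 2] | v \in e] = (fun u => [set v; u]) @: [set~ v].
  apply/setP => e; rewrite inE; apply/andP/imsetP.
    rewrite inE => -[/cards2P [x [y [xy ->]]]]; rewrite !inE => /orP[]/eqP ->.
      by exists y; rewrite ?inE // eq_sym.
    by exists x; rewrite ?inE // setUC.
  case=> u; rewrite !inE => uv ->; split; last by rewrite !inE eqxx.
  by rewrite cards2 (eq_sym v) uv.
rewrite card_in_imset ?cardsC1 ?card_ord //.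
move=> u w; rewrite !inE => uv wv E.
have : w \in [set v; u] by rewrite E !inE eqxx orbT.
by rewrite !inE (negbTE wv) /= => /eqP.
Qed.

Lemma leave_lb k (C : 'I_k -> 8.-tuple 'I_n) : ~~ odd n -> is_packing C ->
  n <= 2 * #|leave C|.
Proof.
move=> ev [Cu Cd].
set U := \bigcup_(i < k) cedges (C i).
have UK : U \subset Kedges n.
  by apply/bigcupsP => i _; apply: cedges_sub; apply: Cu.
have degL v : 0 < deg (leave C) v.
  have E1 : deg (Kedges n) v = deg (leave C) v + deg U v.
    rewrite /deg /leave -/U -cardsUI.
    have -> : [set e in Kedges n :\: U | v \in e] :&: [set e in U | v \in e] = set0.
      by apply/setP => e; rewrite !inE; case: (e \in U); rewrite ?andbF.
    rewrite cards0 addn0; apply: eq_card => e; rewrite !inE.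
    case eU: (e \in U); rewrite ?andbT ?andbF ?orbF //=.
    by have := subsetP UK e eU; rewrite /Kedges inE => ->.
  have E2 : deg U v = \sum_(i < k) deg (cedges (C i)) v.
    rewrite /deg -card_bigcup_disj.
      apply: eq_card => e; rewrite inE; apply/andP/bigcupP.
        by case=> /bigcupP [i _ ei] ve; exists i; rewrite // inE ei.
      by case=> i _; rewrite inE => /andP[ei ve]; split => //; apply/bigcupP; exists i.
    move=> i j ij; apply: (disjointW _ _ (Cd i j ij));
      by apply/subsetP => e; rewrite inE => /andP[].
  have E3 : ~~ odd (deg U v).
    rewrite E2; elim/big_ind: _ => //; first by move=> x y; rewrite oddD => /negbTE -> /negbTE ->.
    by move=> i _; rewrite deg_cedges; [rewrite oddM | exact: Cu].
  have n0 : 0 < n by case: n v {E1 E2 E3 UK U Cd Cu C ev} => [[]|].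
  have : odd n.-1 by move: ev; rewrite -(prednK n0) /=; case: (odd _).
  rewrite -(deg_Kedges v) E1 oddD (negbTE E3) addbF.
  by case: (deg (leave C) v).
have : \sum_(v : 'I_n) deg (leave C) v = 2 * #|leave C|.
  rewrite /deg; under eq_bigr => v _ do rewrite card_filter_sum.
  rewrite exchange_big /=.
  rewrite (eq_bigr (fun _ => 2)); first by rewrite sum_nat_const mulnC.
  move=> e eL.
  have : e \in Kedges n by move: eL; rewrite /leave inE => /andP[].
  rewrite /Kedges inE => /eqP <-; rewrite -sum1_card [RHS]big_mkcond /=.
  by apply: eq_bigr => x _; case: (x \in e).
move=> <-; rewrite -{1}(card_ord n) -sum1_card; apply: leq_sum => v _; exact: degL.
Qed.
End Parity.


Lemma card_set_sum (T : finType) (P : pred T) : #|[set x | P x]| = \sum_x (P x : nat).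
Proof.
rewrite -sum1_card [LHS]big_mkcond /=; apply: eq_bigr => x _; rewrite inE.
by case: (P x).
Qed.

Lemma sum_lt w k : \sum_(i < k) (i < w : nat) = minn w k.
Proof.
elim: k => [|k IH]; first by rewrite big_ord0; lia.
rewrite big_ord_recr /= IH; case: ltnP => H; lia.
Qed.

Lemma sum_gt g k : \sum_(i < k) (g < i : nat) = k - g.+1.
Proof.
elim: k => [|k IH]; first by rewrite big_ord0.
rewrite big_ord_recr /= IH; case: ltnP => H; lia.
Qed.

Lemma sum_eq (g k : nat) : \sum_(i < k) ((g == i :> nat) : nat) = (g < k).
Proof.
elim: k => [|k IH]; first by rewrite big_ord0.
rewrite big_ord_recr /= IH; case: eqP => H; lia.
Qed.

Lemma sum_tri m : \sum_(g < m) (m - g.+1) = 'C(m, 2).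
Proof.
elim: m => [|m IH]; first by rewrite big_ord0.
rewrite big_ord_recl /= binS bin1.
rewrite (eq_bigr (fun g : 'I_m => m - g.+1)) ?IH; first lia.
by move=> g _; rewrite /bump /=; lia.
Qed.

Lemma bin2_double x : 2 * 'C(x, 2) = x * x.-1.
Proof.
elim: x => [|x IH] //; rewrite binS bin1 mulnDr IH; case: x {IH} => //= x; lia.
Qed.

Lemma card_VS m w : w <= 8 -> #|VS m w| = m * w + 8 * 'C(m, 2).
Proof.
move=> w8; rewrite /VS card_set_sum.
rewrite -(pair_bigA _ (fun p (c : 'I_8) => (valid w (p, c) : nat))) /=.
rewrite -(pair_bigA _ (fun (g h : 'I_m) => \sum_(c < 8) (valid w ((g, h), c) : nat))) /=.
rewrite (eq_bigr (fun g : 'I_m => w + 8 * (m - g.+1))).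
  by rewrite big_split /= sum_nat_const card_ord -big_distrr /= sum_tri.
move=> g _.
rewrite (eq_bigr (fun h : 'I_m => w * (g == h :> nat) + 8 * (g < h))).
  rewrite big_split /= -!big_distrr /= sum_gt sum_eq ltn_ord; lia.
move=> h _; rewrite /valid /sg /sh /sc /=.
case: eqP => [E|NE].
  rewrite (eq_bigr (fun c : 'I_8 => (c < w : nat))) // sum_lt E ltnn; lia.
rewrite sum_nat_const card_ord; lia.
Qed.


Definition W0 : seq (seq nat) :=
  [:: [:: 0;2;1;3;4;6;5;7]; [:: 0;3;5;1;6;2;7;4]; [:: 0;5;2;4;1;7;3;6]].
Definition DW0 : seq (seq nat) :=
  [:: [:: 0;3;5;1;6;2;7;4]; [:: 0;5;2;4;1;7;3;6]; [:: 0;2;1;3;4;6;5;7]].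
Definition K44 : seq (seq nat) := [:: [:: 0;4;1;5;2;6;3;7]; [:: 0;5;3;4;2;7;1;6]].
Definition DK44 : seq (seq nat) := [:: [:: 0;5;3;4;2;7;1;6]; [:: 0;4;1;5;2;6;3;7]].
Definition W1 : seq (seq nat) :=
  [:: [:: 1;3;7;8;5;9;6;4]; [:: 0;4;9;7;5;6;2;8]; [:: 0;5;2;9;3;8;1;7];
      [:: 0;2;7;4;3;6;1;9]; [:: 0;3;5;1;2;4;8;6]].
Definition DW1 : seq (seq nat) :=
  [:: [:: 1;6;5;7;9;4;3;8]; [:: 0;5;9;2;7;4;8;6]; [:: 0;2;8;7;3;5;1;9];
      [:: 0;3;9;6;4;2;1;7]; [:: 0;4;1;3;6;2;5;8]].

Definition allchecks r FW FK FW' FK' :=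
  famOK r FW FK && famOK r FW' FK' && disjF FW && disjF FK && disjF FW' && disjF FK' &&
  crossF FW FW' && crossF FK FK' && coverF FW FW' && coverF FW' FW &&
  coverF FK FK' && coverF FK' FK.

Lemma checks0 : allchecks 0 W0 K44 DW0 DK44.
Proof. by vm_compute. Qed.
Lemma checks1 : allchecks 1 W1 K44 DW1 DK44.
Proof. by vm_compute. Qed.

Lemma arith m r X Y K : r <= 1 ->
  2 * X = m * m.-1 -> 2 * Y = (8 * m + 2 * r) * (8 * m + 2 * r).-1 ->
  K = m * (3 + 2 * r) + 8 * X ->
  2 * (Y - 8 * K) <= 8 * m + 2 * r.
Proof.
move=> r1 B1 B2 ->.
have E1 : m * m.-1 + m = m * m by case: m {B1 B2} => //= m; rewrite mulnS; lia.
have E2 : (8 * m + 2 * r) * (8 * m + 2 * r).-1 + (8 * m + 2 * r) = (8 * m + 2 * r) * (8 * m + 2 * r).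
  case: (8 * m + 2 * r) => //= x; rewrite mulnS; lia.
have E3 : (8 * m + 2 * r) * (8 * m + 2 * r) = 64 * (m * m) + 32 * (m * r) + 4 * (r * r) by nia.
have E4 : m * (3 + 2 * r) = 3 * m + 2 * (m * r) by nia.
rewrite E4.
case/orP: (leqVgt r 0) => Hr0.
  have r0 : r = 0 by lia.
  move: E3 E2 B2; rewrite r0 !muln0 => E3 E2 B2. lia.
have r0 : r = 1 by lia.
move: E3 E2 B2; rewrite r0 !muln1 => E3 E2 B2. lia.
Qed.

Section Main.
Variables n m r : nat.
Hypothesis HN : n.+1 = 8 * m + 2 * r.
Hypothesis Hr : r <= 1.

Lemma bigcup_Cf w FW FK :
  \bigcup_(i < #|VS m w|) cedges (@Cf n m w FW FK i) = \bigcup_(s in VS m w) cedges (cyc n FW FK s).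
Proof. by rewrite (big_enum_val (fun s => cedges (cyc n FW FK s))). Qed.

Lemma main_gen FW FK FW' FK' : size FW = 3 + 2 * r -> allchecks r FW FK FW' FK' ->
  exists k (C : 'I_k -> 8.-tuple 'I_n.+1), maximum_packing C /\ almost_2perfect C.
Proof.
move=> sW; rewrite /allchecks.
case/andP=> /andP[/andP[/andP[/andP[/andP[/andP[/andP[/andP[/andP[/andP[F1 F2] dW] dK] dW'] dK'] cW] cK] cvW] cvW'] cvK] cvK'.
have sW' : size FW' = size FW := sizeW cW.
set w := size FW.
have P1 : is_packing (@Cf n m w FW FK) := Cf_packing HN Hr (erefl _) F1 dW dK.
have P2 : is_packing (@Cf n m w FW' FK') := Cf_packing HN Hr sW' F2 dW' dK'.
have UE : \bigcup_(i < #|VS m w|) cedges (@Cf n m w FW' FK' i) =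
          \bigcup_(i < #|VS m w|) cedges (@Cf n m w FW FK i).
  rewrite !bigcup_Cf; apply/eqP; rewrite eqEsubset; apply/andP; split.
    apply/bigcupsP => s; rewrite inE => vs.
    by apply: (cover_sub HN Hr F1 F2 cvW cvK sW'); rewrite sW'.
  apply/bigcupsP => s; rewrite inE => vs.
  by move: (cover_sub HN Hr F2 F1 cvW' cvK' (esym sW') vs); rewrite sW'.
exists #|VS m w|, (@Cf n m w FW FK); split; last first.
  split => //; exists (@Cf n m w FW' FK'); split => //.
    move=> i; apply: (inside_cyc HN Hr F1 F2 cW cK); exact: enum_valid.
  by rewrite /leave UE.
split => // k' C' P'.
have ev : ~~ odd n.+1 by rewrite HN oddD !oddM.
have lb := leave_lb ev P'.
suff H2 : 2 * #|leave (@Cf n m w FW FK)| <= n.+1.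
  by rewrite -(leq_pmul2l (isT : 0 < 2)) (leq_trans H2 lb).
have UK : \bigcup_(i < #|VS m w|) cedges (@Cf n m w FW FK i) \subset Kedges n.+1.
  by apply/bigcupsP => i _; apply: cedges_sub; case: P1 => + _; apply.
rewrite /leave cardsDS // card_bigcup_disj; last by case: P1.
rewrite (eq_bigr (fun _ => 8)); last by move=> i _; rewrite card_cedges //; case: P1 => + _; apply.
rewrite sum_nat_const card_ord.
have KV := card_VS m (w := w); rewrite /w sW in KV.
rewrite /Kedges card_draws card_ord HN.
have r8 : 3 + 2 * r <= 8 by move: Hr; clear; lia.
have Keq : #|VS m w| = m * (3 + 2 * r) + 8 * 'C(m, 2) by rewrite /w sW KV.
rewrite [#|VS m w| * 8]mulnC; exact: (arith Hr (bin2_double m) (bin2_double _) Keq).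
Qed.
End Main.

Unset Implicit Arguments.
Theorem lemma3p9 (n : nat) :
  8 <= n -> n %% 16 \in [:: 0; 2; 8; 10] ->
  exists (k : nat) (C : 'I_k -> 8.-tuple 'I_n),
    maximum_packing C /\ almost_2perfect C.
Proof.
case: n => [//|n] H8 Hmod.
have [E|E] : n.+1 %% 8 = 0 \/ n.+1 %% 8 = 2.
  by move: Hmod; rewrite !inE => /or4P[]/eqP E; lia.
  apply: (@main_gen n (n.+1 %/ 8) 0 _ _ W0 K44 DW0 DK44 _ checks0) => //; lia.
apply: (@main_gen n (n.+1 %/ 8) 1 _ _ W1 K44 DW1 DK44 _ checks1) => //; lia.
Qed.
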